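(* For all integers $m\geq 3$ and $n\geq 1$, the prism graph $C[m]\times P[n+1]$ is antimagic.
   Context: All graphs are finite, undirected and simple. $C[m]$ denotes the cycle on $m$ vertices and $P[k]$ the path on $k$ vertices. The Cartesian product $G_1\times G_2$ of graphs $G_1=(V_1,E_1)$ and $G_2=(V_2,E_2)$ has vertex set $V_1\times V_2$, with $(u_1,u_2)$ adjacent to $(v_1,v_2)$ iff either $u_1=v_1$ and $u_2v_2\in E_2$, or $u_2=v_2$ and $u_1v_1\in E_1$. An antimagic labeling of a graph with $m'$ edges is a bijection $f$ from its edge set to $\{1,\ldots,m'\}$ such that the vertex sums $f^+(v)=\sum_{e\ni v} f(e)$ (sum over edges incident with $v$) are pairwise distinct over all vertices $v$. A graph is antimagic if it admits an antimagic labeling. *)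

(* Defs.v *)
From mathcomp Require Import all_boot.
Set Implicit Arguments. Unset Strict Implicit. Unset Printing Implicit Defensive.

(* A simple graph on a finite vertex type T is given by a symmetric,
   irreflexive adjacency relation adj. *)

Definition edges (T : finType) (adj : rel T) : {set {set T}} :=
  [set e : {set T} | [exists x, exists y, adj x y && (e == [set x; y])]].

Definition vsum (T : finType) (adj : rel T) (f : {set T} -> nat) (v : T) : nat :=
  \sum_(e in edges adj | v \in e) f e.

(* f is a bijection from the edge set onto {1, ..., |E|}:
   injective on E with values in {1..|E|} (hence bijective, E being finite). *)
Definition edge_labeling (T : finType) (adj : rel T) (f : {set T} -> nat) : Prop :=
  {in edges adj &, injective f} /\
  (forall e, e \in edges adj -> 1 <= f e <= #|edges adj|).

Definition antimagic_labeling (T : finType) (adj : rel T) (f : {set T} -> nat) : Prop :=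
  edge_labeling adj f /\ injective (vsum adj f).

Definition antimagic (T : finType) (adj : rel T) : Prop :=
  exists f, antimagic_labeling adj f.

(* Cycle C[m] on vertices 'I_m (a simple cycle when m >= 3). *)
Definition cycle_adj (m : nat) : rel 'I_m :=
  fun i j => (val j == i.+1 %% m) || (val i == j.+1 %% m).

Definition path_adj (k : nat) : rel 'I_k :=
  fun i j => (val j == i.+1) || (val i == j.+1).

Definition cart_adj (T1 T2 : finType) (a1 : rel T1) (a2 : rel T2) : rel (T1 * T2) :=
  fun u v => ((u.1 == v.1) && a2 u.2 v.2) || ((u.2 == v.2) && a1 u.1 v.1).

Arguments antimagic {T} adj.
Definition prism_adj (m k : nat) : rel ('I_m * 'I_k) :=
  cart_adj (@cycle_adj m) (@path_adj k).
Arguments prism_adj : clear implicits.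

(* Main.v *)
Require Import Defs.
From mathcomp Require Import all_boot zify.
Set Implicit Arguments. Unset Strict Implicit. Unset Printing Implicit Defensive.

Section Arith.
Variables (m n : nat).
Hypothesis m3 : 3 <= m.
Hypothesis n1 : 1 <= n.

Definition a i := if 2*i <= m-1 then 2*i else 2*(m-i)-1.
Definition rho i := if i == 0 then 0 else if 2*i <= m-1 then 2*i-1
  else if 2*(i-1) <= m-1 then m-1 else 2*(m-i).
Definition pi i := if i == 0 then m-1 else i-1.
Definition hb j := if 2*j <= n then 4*j else 4*(n-j)+2.
Definition vb g := if 2*g <= n-1 then 4*g+1 else 4*(n-1-g)+3.
Definition Lh i j := m * hb j + a i + 1.
Definition Lv i g := m * vb g + rho i + 1.
Definition S i j := Lh i j + Lh (pi i) j + (if j < n then Lv i j else 0)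
   + (if 0 < j then Lv i (j-1) else 0).

Lemma a_lt i : i < m -> a i < m.
Proof. rewrite /a; case: ifP; lia. Qed.
Lemma rho_lt i : i < m -> rho i < m.
Proof. rewrite /rho; (repeat case: ifP); lia. Qed.
Lemma a_inj i i' : i < m -> i' < m -> a i = a i' -> i = i'.
Proof. rewrite /a; (repeat case: ifP); lia. Qed.
Lemma rho_inj i i' : i < m -> i' < m -> rho i = rho i' -> i = i'.
Proof. rewrite /rho; (repeat case: ifP); lia. Qed.
Lemma s_rho i : i < m -> 2 * rho i <= a i + a (pi i) + 1 <= 2 * rho i + 2.
Proof. rewrite /rho /a /pi; (repeat case: ifP); lia. Qed.

Lemma hb_le j : j <= n -> hb j <= 2 * n.
Proof. rewrite /hb; case: ifP; lia. Qed.
Lemma vb_le g : g < n -> vb g <= 2 * n.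
Proof. rewrite /vb; case: ifP; lia. Qed.
Lemma blk_inj j g : j <= n -> g < n -> hb j <> vb g.
Proof. rewrite /hb /vb; (repeat case: ifP); lia. Qed.
Lemma hb_inj j j' : j <= n -> j' <= n -> hb j = hb j' -> j = j'.
Proof. rewrite /hb; (repeat case: ifP); lia. Qed.
Lemma vb_inj j j' : j < n -> j' < n -> vb j = vb j' -> j = j'.
Proof. rewrite /vb; (repeat case: ifP); lia. Qed.

Definition K j := 2 * hb j + (if j < n then vb j else 0) + (if 0 < j then vb (j-1) else 0).
Lemma K_sep j j' : j <= n -> j' <= n -> j < j' -> K j + 4 <= K j' \/ K j' + 4 <= K j.
Proof. rewrite /K /hb /vb; (repeat case: ifP); lia. Qed.
Definition O i j := a i + a (pi i) + 2 + (if j < n then rho i + 1 else 0)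
   + (if 0 < j then rho i + 1 else 0).
Lemma S_dec i j : S i j = m * K j + O i j.
Proof.
rewrite /S /Lh /Lv /K /O; case: ifP => _; case: ifP => _; rewrite ?mulnDr ?muln0 ?addn0 ?mul2n ?doubleD; lia.
Qed.
Lemma O_bnd i j : i < m -> j <= n -> 3 <= O i j <= 4 * m.
Proof.
move=> im jn; have := a_lt im; have := rho_lt im.
have : a (pi i) < m by apply: a_lt; rewrite /pi; case: ifP; lia.
rewrite /O; case: ifP => h1; case: ifP => h2; lia.
Qed.
Lemma O_inj i i' j : i < m -> i' < m -> j <= n -> O i j = O i' j -> i = i'.
Proof.
move=> im im' jn; have := s_rho im; have := s_rho im'.
rewrite /O => h1 h2 e; apply: rho_inj => //; move: e h1 h2.
case: ifP => c1; case: ifP => c2; lia.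
Qed.
Lemma S_inj i i' j j' : i < m -> i' < m -> j <= n -> j' <= n ->
  S i j = S i' j' -> i = i' /\ j = j'.
Proof.
move=> im im' jn jn'; rewrite !S_dec.
have [->|ne] := eqVneq j j'.
  by move=> e; split => //; apply: (O_inj im im' jn'); lia.
have := O_bnd im jn; have := O_bnd im' jn'.
have lt : forall x y, x + 4 <= y -> m * x + 4 * m <= m * y.
  by move=> x y h; rewrite mulnC -mulnDl mulnC leq_mul2l h orbT.
case: (ltngtP j j') ne => // h _.
  case: (K_sep jn jn' h) => /lt; lia.
case: (K_sep jn' jn h) => /lt; lia.
Qed.
End Arith.
Lemma set2_eq (T : finType) (u v u' v' : T) : [set u; v] = [set u'; v'] ->
  (u = u' /\ v = v') \/ (u = v' /\ v = u').
Proof.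
move=> e.
have hu : u \in [set u'; v'] by rewrite -e !inE eqxx.
have hv : v \in [set u'; v'] by rewrite -e !inE eqxx orbT.
have hu' : u' \in [set u; v] by rewrite e !inE eqxx.
have hv' : v' \in [set u; v] by rewrite e !inE eqxx orbT.
move: hu hv hu' hv'; rewrite !inE.
by do 4 (case/orP => /eqP ?; subst); auto.
Qed.

Section Graph.
Variables (p n : nat).
Hypothesis n1 : 0 < n.
Local Notation m := p.+3.
Let m3 : 2 < m := isT.

Definition T := ('I_m * 'I_n.+1)%type.
Definition I := ('I_m * 'I_n.+1 + 'I_m * 'I_n)%type.
Definition succ (i : 'I_m) : 'I_m := inord (i.+1 %% m).
Lemma succE (i : 'I_m) : nat_of_ord (succ i) = if i.+1 == m then 0 else i.+1.
Proof.
rewrite /succ /= inordK ?ltn_pmod //; have := ltn_ord i.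
case: eqP => [-> _|ne lt]; first by rewrite modnn.
by rewrite modn_small //; lia.
Qed.
Lemma succ_val (i : 'I_m) : nat_of_ord (succ i) = i.+1 %% m.
Proof. by rewrite /succ /= inordK ?ltn_pmod. Qed.
Definition hE (x : 'I_m * 'I_n.+1) : {set T} := [set x; (succ x.1, x.2)].
Definition vE (y : 'I_m * 'I_n) : {set T} :=
  [set (y.1, widen_ord (leqnSn n) y.2); (y.1, lift ord0 y.2)].
Definition idx (x : I) : {set T} := match x with inl a => hE a | inr b => vE b end.

Lemma idx_inj : injective idx.
Proof.
have sv := succE.
case=> [[x1 x2]|[y1 y2]] [[z1 z2]|[w1 w2]] /= /set2_eq [[e1 e2]|[e1 e2]];
  move: e1 e2; rewrite /=.
- by move=> -> .
- case=> e1 e2 [e3 e4]; exfalso; move: (congr1 val e1) (congr1 val e3) => /=.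
  rewrite !sv; have := ltn_ord z1; have := ltn_ord x1.
  by case: eqP => ?; case: eqP => ?; lia.
- case=> e1 e2 [e3 e4]; exfalso; move: (congr1 val e1) (congr1 val e3) => /=.
  by rewrite sv -e1; case: eqP => ?; lia.
- case=> e1 e2 [e3 e4]; exfalso; move: (congr1 val e1) (congr1 val e3) => /=.
  by rewrite sv -e1; case: eqP => ?; lia.
- case=> e1 e2 [e3 e4]; exfalso; move: (congr1 val e1) (congr1 val e3) => /=.
  by rewrite sv e1; case: eqP => ?; lia.
- case=> e1 e2 [e3 e4]; exfalso; move: (congr1 val e1) (congr1 val e3) => /=.
  by rewrite sv e1; case: eqP => ?; lia.
- by case=> -> /val_inj -> _.
- case=> e1 e2 [e3 e4]; exfalso; move: e2 e4; rewrite /bump /=; lia.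
Qed.

Lemma succ_mod (x1 y1 : 'I_m) : (y1 : nat) = x1.+1 %% m -> y1 = succ x1.
Proof. by move=> e; apply: val_inj; rewrite /succ /= inordK ?ltn_pmod. Qed.

Lemma edgesE : edges (prism_adj m n.+1) = idx @: [set: I].
Proof.
apply/setP => e; rewrite inE; apply/existsP/imsetP.
- case=> -[x1 x2] /existsP [[y1 y2] /andP [ad /eqP ->]].
  move: ad; rewrite /prism_adj /cart_adj /cycle_adj /path_adj /=.
  case/orP => /andP [/eqP e1 /orP [/eqP e2|/eqP e2]]; simpl in e1, e2.
  + have lt : x2 < n by have := ltn_ord y2; lia.
    exists (inr (x1, Ordinal lt)); first by rewrite inE.
    rewrite /= /vE /= -e1.
    congr [set _; _]; congr pair; apply: val_inj => //=; by rewrite lift0 e2.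
  + have lt : y2 < n by have := ltn_ord x2; lia.
    exists (inr (y1, Ordinal lt)); first by rewrite inE.
    rewrite /= /vE /= -e1 setUC.
    congr [set _; _]; congr pair; apply: val_inj => //=; by rewrite lift0 e2.
  + exists (inl (x1, x2)); first by rewrite inE.
    by rewrite /= /hE /= e1 -(succ_mod e2).
  + exists (inl (y1, y2)); first by rewrite inE.
    by rewrite /= /hE /= e1 setUC -(succ_mod e2).
- case=> z _ ->; case: z => [[x1 x2]|[y1 y2]] /=.
  + exists (x1, x2); apply/existsP; exists (succ x1, x2); rewrite eqxx andbT.
    rewrite /prism_adj /cart_adj /cycle_adj /= eqxx /=.
    by rewrite succ_val eqxx !orbT.
  + exists (y1, widen_ord (leqnSn n) y2); apply/existsP.
    exists (y1, lift ord0 y2); rewrite eqxx andbT.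
    rewrite /prism_adj /cart_adj /path_adj /= eqxx /=.
    by rewrite /bump leq0n eqxx.
Qed.

Definition L (x : I) : nat :=
  match x with inl a => Lh m n a.1 a.2 | inr b => Lv m n b.1 b.2 end.
Definition f (e : {set T}) : nat :=
  if [pick x | idx x == e] is Some x then L x else 0.

Lemma f_idx x : f (idx x) = L x.
Proof.
rewrite /f; case: pickP => [y /eqP /idx_inj -> //|H].
by have := H x; rewrite eqxx.
Qed.

Lemma divmod_inj b r b' r' : r < m -> r' < m -> m * b + r = m * b' + r' ->
  b = b' /\ r = r'.
Proof.
move=> hr hr' e.
have eb : b = b'.
  have := congr1 (divn^~ m) e; rewrite /= !(mulnC m) !divnMDl // !divn_small //.
  by rewrite !addn0.
by subst; split => //; move/eqP: e; rewrite eqn_add2l => /eqP.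
Qed.

Lemma L_inj : injective L.
Proof.
have al := a_lt m3 n1; have rl := rho_lt m3 n1.
case=> [[i j]|[i g]] [[i' j']|[i' g']] /=; rewrite /Lh /Lv => /addIn e;
  have := divmod_inj _ _ e.
- case/(_ (al _ (ltn_ord i)) (al _ (ltn_ord i'))) => /(hb_inj m3 n1) hj /(a_inj m3 n1) hi.
  by rewrite (val_inj (hi (ltn_ord i) (ltn_ord i'))) (val_inj (hj (ltn_ord j) (ltn_ord j'))).
- case/(_ (al _ (ltn_ord i)) (rl _ (ltn_ord i'))) => /(blk_inj m3 n1) hj.
  by have := hj (ltn_ord j) (ltn_ord g').
- case/(_ (rl _ (ltn_ord i)) (al _ (ltn_ord i'))) => /esym /(blk_inj m3 n1) hj.
  by have := hj (ltn_ord j') (ltn_ord g).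
- case/(_ (rl _ (ltn_ord i)) (rl _ (ltn_ord i'))) => /(vb_inj m3 n1) hj /(rho_inj m3 n1) hi.
  by rewrite (val_inj (hi (ltn_ord i) (ltn_ord i'))) (val_inj (hj (ltn_ord g) (ltn_ord g'))).
Qed.

Lemma L_range x : 1 <= L x <= (2 * n + 1) * m.
Proof.
have al := a_lt m3 n1; have rl := rho_lt m3 n1.
case: x => [[i j]|[i g]] /=; rewrite /Lh /Lv addn1 ltnS leq0n /= mulnDl mul1n.
- have := al _ (ltn_ord i); have : hb n j <= 2 * n by apply: (hb_le m3 n1); rewrite -ltnS.
  move=> h1 h2; rewrite (mulnC _ m); have := leq_mul (leqnn m) h1; lia.
- have := rl _ (ltn_ord i); have : vb n g <= 2 * n by apply: (vb_le m3 n1).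
  move=> h1 h2; rewrite (mulnC _ m); have := leq_mul (leqnn m) h1; lia.
Qed.

Lemma card_edges : #|edges (prism_adj m n.+1)| = (2 * n + 1) * m.
Proof.
rewrite edgesE card_imset; last exact: idx_inj.
rewrite cardsT card_sum !card_prod !card_ord; lia.
Qed.

Definition pr (i : 'I_m) : 'I_m := inord (pi m i).
Lemma pr_val (i : 'I_m) : nat_of_ord (pr i) = pi m i.
Proof. rewrite /pr /= inordK // /pi; have := ltn_ord i; case: ifP; lia. Qed.

Lemma succ_eq (x i : 'I_m) : (succ x == i) = (x == pr i).
Proof.
apply/eqP/eqP => h; apply: val_inj; move: (congr1 val h) => /=;
  rewrite succE pr_val /pi; have := ltn_ord i; have := ltn_ord x;
  (repeat case: eqP); lia.
Qed.

Lemma vsumE v : vsum (prism_adj m n.+1) f v = \sum_(x | v \in idx x) L x.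
Proof.
rewrite /vsum edgesE big_imset_cond /=; last by move=> x y _ _; apply: idx_inj.
by apply: eq_big => [x|x _]; rewrite ?in_setT ?f_idx.
Qed.

Lemma sum_pred1 (X : finType) (Q : pred X) (F : X -> nat) y :
  Q =1 pred1 y -> \sum_(b | Q b) F b = F y.
Proof. by move=> h; rewrite (eq_bigl _ _ h) big_pred1_eq. Qed.
Lemma sum_pred0 (X : finType) (Q : pred X) (F : X -> nat) :
  Q =1 pred0 -> \sum_(b | Q b) F b = 0.
Proof. by move=> h; rewrite big1 // => b; rewrite h. Qed.

Lemma vsum_val (i : 'I_m) (j : 'I_n.+1) :
  \sum_(x | (i, j) \in idx x) L x = S m n i j.
Proof.
rewrite big_sumType /S -[in RHS]addnA; congr (_ + _).
- rewrite (bigD1 (i, j)) /=; last by rewrite /hE !inE eqxx.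
  congr (_ + _); rewrite (@sum_pred1 _ _ _ (pr i, j)) /=; first by rewrite pr_val.
  case=> x1 x2; rewrite /hE /= !inE !xpair_eqE /=.
  rewrite [i == succ x1]eq_sym succ_eq (eq_sym i) (eq_sym j).
  have hne : (i == pr i) = false.
    apply/negP => /eqP e; move: (congr1 val e) => /=; rewrite pr_val /pi.
    have := ltn_ord i; case: ifP; lia.
  have [->|ne] := eqVneq x1 i; first by rewrite hne /=; case: (x2 == j).
  by rewrite /= andbT.
- rewrite big_mkcond /=.
  rewrite (eq_bigr (fun b : 'I_m * 'I_n =>
     (if (b.1 == i) && (b.2 == j :> nat) then Lv m n b.1 b.2 else 0) +
     (if (b.1 == i) && (b.2.+1 == j) then Lv m n b.1 b.2 else 0))); last first.
    case=> b1 b2 _; rewrite /vE /= !inE !xpair_eqE /= -!val_eqE /= /bump leq0n.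
    rewrite ?add1n; do 8 (try (case: eqP => ? /=)); rewrite ?addn0 ?add0n //; lia.
  rewrite big_split /= -!big_mkcond /=; congr (_ + _).
  + case: ifP => h.
      apply: (@sum_pred1 _ _ _ (i, Ordinal h)) => -[b1 b2] /=.
      by rewrite !xpair_eqE.
    apply: sum_pred0 => -[b1 b2] /=; apply/negP => /andP [_ /eqP e].
    by move: h (ltn_ord b2); rewrite -e => ->.
  + case: ifP => h.
      have h' : j - 1 < n by have := ltn_ord j; lia.
      apply: (@sum_pred1 _ _ _ (i, Ordinal h')) => -[b1 b2] /=.
      rewrite !xpair_eqE /=; congr (_ && _); rewrite -val_eqE /=; apply/eqP/eqP => /=; lia.
    apply: sum_pred0 => -[b1 b2] /=; apply/negP => /andP [_ /eqP e].
    by move: h; rewrite -e.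
Qed.
End Graph.

Theorem theorem1p2 (m n : nat) :
  3 <= m -> 1 <= n -> antimagic (prism_adj m n.+1).
Proof.
case: m => [|[|[|p]]] // _ n1.
exists (@f p n); split; first split.
- move=> e e'; rewrite (@edgesE p n n1) => /imsetP [x _ ->] /imsetP [y _ ->].
  by rewrite !(@f_idx p n n1) => /(@L_inj p n n1) ->.
- move=> e; rewrite (@card_edges p n n1) (@edgesE p n n1) => /imsetP [x _ ->].
  by rewrite (@f_idx p n n1); apply: (@L_range p n n1).
- move=> [i j] [i' j']; rewrite !(@vsumE p n n1) !(@vsum_val p n n1).
  have m3 : 2 < p.+3 by [].
  move/(S_inj m3 n1) => /(_ (ltn_ord i) (ltn_ord i') (ltn_ord j) (ltn_ord j')) [e1 e2].
  by rewrite (val_inj e1) (val_inj e2).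
Qed.
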